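(* Let $K$ be a nonempty finite set and $X=\Delta(K)$. If $f,g\in D_0$ and $\lambda\in[0,1]$, then each of the following belongs to $D_0$: - $-f$, - $\max\{f,g\}$, - $\min\{f,g\}$, - $\lambda f+(1-\lambda)g$. Moreover, the linear span of $D_0$ is dense in $\mathcal C(X)$ for the uniform norm.
   Context: $X=\Delta(K)=\{p\in\mathbb R_+^K:\sum_k p^k=1\}$. $D_0$ (''non revealing functions'') is the set of functions $f:X\to\mathbb R$ of the following form. There exist: - nonempty finite sets $I,J$, and - matrices $(G^k)_{k\in K}$ in $[-1,1]^{I\times J}$, such that for all $p\in X$, $f(p)=\mathrm{Val}\big(\sum_{k\in K}p^kG^k\big)$. Here $\mathrm{Val}(M)=\max_{x\in\Delta(I)}\min_{y\in\Delta(J)}\sum_{i,j}x(i)y(j)M(i,j)$ is the value of the zero-sum matrix game $M$. *)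

(* Defs.v *)
From Stdlib Require Import Reals Lra Lia.
Open Scope R_scope.

(* Finite index sets are represented as {0,...,n-1} (n : nat).
   Vectors indexed by such a set are functions nat -> R (only the
   entries with index < n matter). *)

Fixpoint sumR (n : nat) (f : nat -> R) : R :=
  match n with
  | O => 0
  | S n' => sumR n' f + f n'
  end.

Definition simplex (n : nat) (p : nat -> R) : Prop :=
  (forall i, (i < n)%nat -> 0 <= p i) /\ sumR n p = 1.

Definition payoff (m n : nat) (M : nat -> nat -> R) (x y : nat -> R) : R :=
  sumR m (fun i => sumR n (fun j => x i * y j * M i j)).

Definition is_min_payoff (m n : nat) (M : nat -> nat -> R) (x : nat -> R) (w : R) : Prop :=
  (exists y, simplex n y /\ payoff m n M x y = w) /\
  (forall y, simplex n y -> w <= payoff m n M x y).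

Definition IsVal (m n : nat) (M : nat -> nat -> R) (v : R) : Prop :=
  (exists x, simplex m x /\ is_min_payoff m n M x v) /\
  (forall x w, simplex m x -> is_min_payoff m n M x w -> w <= v).

(* D_0 on X = Delta({0..k-1}): non revealing functions.  A function
   f : (nat -> R) -> R represents a function on X (only its values on
   X are constrained). *)
Definition D0 (k : nat) (f : (nat -> R) -> R) : Prop :=
  exists (m n : nat) (G : nat -> nat -> nat -> R),
    (1 <= m)%nat /\ (1 <= n)%nat /\
    (forall l i j, (l < k)%nat -> (i < m)%nat -> (j < n)%nat ->
        -1 <= G l i j <= 1) /\
    (forall p, simplex k p ->
        IsVal m n (fun i j => sumR k (fun l => p l * G l i j)) (f p)).

Definition continuous_on_simplex (k : nat) (h : (nat -> R) -> R) : Prop :=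
  forall p, simplex k p -> forall e, 0 < e -> exists d, 0 < d /\
    forall q, simplex k q -> (forall i, (i < k)%nat -> Rabs (p i - q i) < d) ->
      Rabs (h p - h q) < e.

(* Main.v *)
Require Import Defs.
From Stdlib Require Import Reals.
From Stdlib Require Import Lra Lia List Classical ClassicalEpsilon.
From Coquelicot Require Compactness.
Open Scope R_scope.

Lemma sumR_ext n f g : (forall i, (i < n)%nat -> f i = g i) -> sumR n f = sumR n g.
Proof. induction n; simpl; intros H; auto. rewrite IHn by (intros; apply H; lia). rewrite H by lia. auto. Qed.

Lemma sumR_plus n f g : sumR n (fun i => f i + g i) = sumR n f + sumR n g.
Proof. induction n; simpl; [lra|]. rewrite IHn; lra. Qed.

Lemma sumR_scal n c f : sumR n (fun i => c * f i) = c * sumR n f.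
Proof. induction n; simpl; [lra|]. rewrite IHn; lra. Qed.

Lemma sumR_opp n f : sumR n (fun i => - f i) = - sumR n f.
Proof. induction n; simpl; [lra|]. rewrite IHn; lra. Qed.

Lemma sumR_zero n : sumR n (fun _ => 0) = 0.
Proof. induction n; simpl; [lra|]. rewrite IHn; lra. Qed.

Lemma sumR_le n f g : (forall i, (i < n)%nat -> f i <= g i) -> sumR n f <= sumR n g.
Proof. induction n; simpl; intros H; [lra|]. assert (f n <= g n) by (apply H; lia).
 assert (sumR n f <= sumR n g) by (apply IHn; intros; apply H; lia). lra. Qed.

Lemma sumR_nonneg n f : (forall i, (i < n)%nat -> 0 <= f i) -> 0 <= sumR n f.
Proof. intros H. rewrite <- (sumR_zero n). apply sumR_le; auto. Qed.

Lemma sumR_swap m n F :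
  sumR m (fun i => sumR n (fun j => F i j)) = sumR n (fun j => sumR m (fun i => F i j)).
Proof. induction m; simpl. { rewrite sumR_zero; auto. }
 rewrite IHm. rewrite <- sumR_plus. auto. Qed.

Lemma sumR_add_n a b f : sumR (a + b) f = sumR a f + sumR b (fun i => f (a + i)%nat).
Proof. induction b; simpl. { rewrite Nat.add_0_r; lra. }
 rewrite Nat.add_succ_r; simpl. rewrite IHb; lra. Qed.

Lemma sumR_mul_n p q F :
  sumR (p * q) F = sumR q (fun b => sumR p (fun a => F (a + p * b)%nat)).
Proof. induction q; simpl. { rewrite Nat.mul_0_r; auto. }
 rewrite Nat.mul_succ_r, sumR_add_n, IHq. f_equal. apply sumR_ext; intros.
 f_equal; lia. Qed.

Lemma sumR_delta n j f : (j < n)%nat ->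
  sumR n (fun i => if Nat.eqb i j then f i else 0) = f j.
Proof. induction n; intros Hj; [lia|]. simpl.
 destruct (Nat.eq_dec j n).
 - subst. rewrite Nat.eqb_refl. rewrite (sumR_ext _ _ (fun _ => 0)). rewrite sumR_zero; lra.
   intros i Hi. destruct (Nat.eqb_spec i n); [lia|auto].
 - rewrite IHn by lia. destruct (Nat.eqb_spec n j); [lia|lra]. Qed.

Lemma sumR_nonneg_zero n f : (forall i, (i < n)%nat -> 0 <= f i) -> sumR n f = 0 ->
  forall i, (i < n)%nat -> f i = 0.
Proof. induction n; intros H Hs i Hi; [lia|]. simpl in Hs.
 assert (0 <= sumR n f) by (apply sumR_nonneg; intros; apply H; lia).
 assert (0 <= f n) by (apply H; lia).
 destruct (Nat.eq_dec i n). subst; lra. apply IHn; [intros; apply H; lia|lra|lia]. Qed.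

Lemma mix_ge n y a c : simplex n y -> (forall j, (j < n)%nat -> c <= a j) ->
  c <= sumR n (fun j => y j * a j).
Proof. intros [Hy Hs] H. replace c with (sumR n (fun j => y j * c)).
 apply sumR_le; intros. apply Rmult_le_compat_l; auto.
 rewrite (sumR_ext _ _ (fun j => c * y j)) by (intros; lra). rewrite sumR_scal, Hs; lra. Qed.

Lemma mix_le n y a c : simplex n y -> (forall j, (j < n)%nat -> a j <= c) ->
  sumR n (fun j => y j * a j) <= c.
Proof. intros [Hy Hs] H. replace c with (sumR n (fun j => y j * c)).
 apply sumR_le; intros. apply Rmult_le_compat_l; auto.
 rewrite (sumR_ext _ _ (fun j => c * y j)) by (intros; lra). rewrite sumR_scal, Hs; lra. Qed.

Definition ej (j : nat) : nat -> R := fun i => if Nat.eqb i j then 1 else 0.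

Lemma simplex_ej n j : (j < n)%nat -> simplex n (ej j).
Proof. intros Hj; split. intros i _; unfold ej; destruct (Nat.eqb i j); lra.
 unfold ej. apply (sumR_delta n j (fun _ => 1)); auto. Qed.

Lemma sumR_ej n j f : (j < n)%nat -> sumR n (fun i => ej j i * f i) = f j.
Proof. intros Hj. rewrite <- (sumR_delta n j f Hj). apply sumR_ext; intros.
 unfold ej; destruct (Nat.eqb i j); lra. Qed.

Lemma payoff_rows m n M x y :
  payoff m n M x y = sumR m (fun i => x i * sumR n (fun j => y j * M i j)).
Proof. unfold payoff. apply sumR_ext; intros. rewrite <- sumR_scal. apply sumR_ext; intros; lra. Qed.

Lemma payoff_cols m n M x y :
  payoff m n M x y = sumR n (fun j => y j * sumR m (fun i => x i * M i j)).
Proof. unfold payoff. rewrite sumR_swap. apply sumR_ext; intros. rewrite <- sumR_scal. apply sumR_ext; intros; lra. Qed.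

Definition saddle m n (M : nat -> nat -> R) v x y :=
  simplex m x /\ simplex n y /\
  (forall j, (j < n)%nat -> v <= sumR m (fun i => x i * M i j)) /\
  (forall i, (i < m)%nat -> sumR n (fun j => y j * M i j) <= v).

Lemma saddle_IsVal m n M v x y : saddle m n M v x y -> IsVal m n M v.
Proof. intros (Hx & Hy & Hc & Hr). split.
 - exists x; split; auto. split.
   + exists y; split; auto. apply Rle_antisym.
     * rewrite payoff_rows. apply mix_le; auto.
     * rewrite payoff_cols. apply mix_ge; auto.
   + intros y' Hy'. rewrite payoff_cols. apply mix_ge; auto.
 - intros x' w Hx' [_ Hw]. apply Rle_trans with (payoff m n M x' y); auto.
   rewrite payoff_rows. apply mix_le; auto. Qed.

Definition sumL (ys : list (R * (nat -> R))) (i : nat) : R :=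
  fold_right (fun wc acc => fst wc * snd wc i + acc) 0 ys.

Lemma sumL_app a b i : sumL (a ++ b) i = sumL a i + sumL b i.
Proof. induction a; simpl; [lra|]. unfold sumL in *; simpl. rewrite IHa; lra. Qed.

Lemma list_max (l : list R) : l <> nil -> exists a, In a l /\ forall b, In b l -> b <= a.
Proof. induction l as [|x l IH]; intros H; [congruence|].
 destruct l as [|y l'].
 - exists x; split; [left; auto|]. intros b [->|[]]; lra.
 - destruct IH as [a [Ha Hb]]; [discriminate|].
   destruct (Rle_dec x a).
   + exists a; split; [right; auto|]. intros b [->|Hb']; auto.
   + exists x; split; [left; auto|]. intros b [->|Hb']; [lra|]. apply Hb in Hb'; lra. Qed.

Lemma list_min (l : list R) : l <> nil -> exists a, In a l /\ forall b, In b l -> a <= b.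
Proof. intros H. destruct (list_max (map Ropp l)) as [a [Ha Hb]].
 destruct l; simpl; congruence.
 apply in_map_iff in Ha. destruct Ha as [a' [<- Ha']]. exists a'; split; auto.
 intros b Hb'. specialize (Hb (-b)). assert (- b <= - a') by (apply Hb; apply in_map; auto). lra. Qed.

Lemma interval_lemma (Lo Hi : list R) : (forall a b, In a Lo -> In b Hi -> a < b) ->
  exists t, (forall a, In a Lo -> a < t) /\ (forall b, In b Hi -> t < b).
Proof. intros H.
 destruct Lo as [|a0 Lo'] eqn:ELo; destruct Hi as [|b0 Hi'] eqn:EHi.
 - exists 0; split; intros _ [].
 - destruct (list_min (b0 :: Hi')) as [b [Hb Hm]]; [discriminate|].
   exists (b - 1); split; [intros _ []|]. intros b' Hb'; apply Hm in Hb'; lra.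
 - destruct (list_max (a0 :: Lo')) as [a [Ha Hm]]; [discriminate|].
   exists (a + 1); split; [|intros _ []]. intros a' Ha'; apply Hm in Ha'; lra.
 - rewrite <- ELo, <- EHi in *.
   destruct (list_max Lo) as [a [Ha Hm]]; [subst; discriminate|].
   destruct (list_min Hi) as [b [Hb Hm']]; [subst; discriminate|].
   assert (a < b) by auto.
   exists ((a + b) / 2); split.
   + intros a' Ha'; apply Hm in Ha'; lra.
   + intros b' Hb'; apply Hm' in Hb'; lra. Qed.

Definition G1 m (cols : list (nat -> R)) := exists x : nat -> R,
  (forall i, (i < m)%nat -> 0 <= x i) /\
  forall c, In c cols -> 0 < sumR m (fun i => x i * c i).

Definition G2 m (cols : list (nat -> R)) := exists ys : list (R * (nat -> R)),
  (forall wc, In wc ys -> 0 <= fst wc /\ In (snd wc) cols) /\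
  (exists wc, In wc ys /\ 0 < fst wc) /\
  (forall i, (i < m)%nat -> sumL ys i <= 0).

Definition nonpb m (c : nat -> R) : bool := if Rle_dec (c m) 0 then true else false.
Definition posb m (c : nat -> R) : bool := if Rlt_dec 0 (c m) then true else false.
Definition negb' m (c : nat -> R) : bool := if Rlt_dec (c m) 0 then true else false.

Definition pairc m (cj cl : nat -> R) : nat -> R := fun i => - cl m * cj i + cj m * cl i.

Definition FMcols m (cols : list (nat -> R)) :=
  filter (nonpb m) cols ++
  flat_map (fun cj => map (fun cl => pairc m cj cl) (filter (negb' m) cols)) (filter (posb m) cols).

Lemma in_filter_nonp m c cols : In c (filter (nonpb m) cols) <-> In c cols /\ c m <= 0.
Proof. rewrite filter_In. unfold nonpb. destruct (Rle_dec (c m) 0); intuition congruence. Qed.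
Lemma in_filter_pos m c cols : In c (filter (posb m) cols) <-> In c cols /\ 0 < c m.
Proof. rewrite filter_In. unfold posb. destruct (Rlt_dec 0 (c m)); intuition congruence. Qed.
Lemma in_filter_neg m c cols : In c (filter (negb' m) cols) <-> In c cols /\ c m < 0.
Proof. rewrite filter_In. unfold negb'. destruct (Rlt_dec (c m) 0); intuition congruence. Qed.

Lemma in_FMcols m cols b : In b (FMcols m cols) ->
  (In b cols /\ b m <= 0) \/
  exists cj cl, In cj cols /\ 0 < cj m /\ In cl cols /\ cl m < 0 /\ b = pairc m cj cl.
Proof. unfold FMcols. intros H. apply in_app_or in H. destruct H as [H|H].
 - left. apply in_filter_nonp; auto.
 - right. apply in_flat_map in H. destruct H as [cj [Hj H]]. apply in_map_iff in H.
   destruct H as [cl [<- Hl]]. apply in_filter_pos in Hj. apply in_filter_neg in Hl.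
   exists cj, cl; tauto. Qed.

Lemma G2_lift m cols ys' :
  (forall wc, In wc ys' -> 0 <= fst wc /\ In (snd wc) (FMcols m cols)) ->
  exists ys, (forall wc, In wc ys -> 0 <= fst wc /\ In (snd wc) cols) /\
    ((exists wc, In wc ys' /\ 0 < fst wc) -> exists wc, In wc ys /\ 0 < fst wc) /\
    (forall i, sumL ys i = sumL ys' i) /\ sumL ys m <= 0.
Proof. induction ys' as [|[w b] ys' IH]; intros H.
 - exists nil. split; [intros _ []|]. split; [intros [wc [[] _]]|]. split; [auto|]. simpl; lra.
 - destruct IH as [ys [A1 [A2 [A3 A4]]]]. intros wc Hwc; apply H; right; auto.
   destruct (H (w, b) (or_introl eq_refl)) as [Hw Hb]. simpl in Hw, Hb.
   apply in_FMcols in Hb. destruct Hb as [[Hb Hbm] | [cj [cl [Hj [Hjm [Hl [Hlm ->]]]]]]].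
   + exists ((w, b) :: ys). split; [|split; [|split]].
     * intros wc0 [<-|Hwc]; simpl; [auto|apply A1; auto].
     * intros [wc0 [[<-|Hwc] Hp]]. exists (w,b); split; [left|]; auto.
       destruct A2 as [wc' ?]; [exists wc0; auto|]. exists wc'; simpl; tauto.
     * intros i. unfold sumL in *; simpl. rewrite A3; auto.
     * unfold sumL in *; simpl. assert (w * b m <= 0). { nra. }
       lra.
   + exists ((w * - cl m, cj) :: (w * cj m, cl) :: ys). split; [|split; [|split]].
     * intros wc0 [<-|[<-|Hwc]]; simpl; [split; auto; nra|split; auto; nra|apply A1; auto].
     * intros [wc0 [[<-|Hwc] Hp]]. exists (w * - cl m, cj); split; [left; auto|simpl in *; nra].
       destruct A2 as [wc' ?]; [exists wc0; auto|]. exists wc'; simpl; tauto.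
     * intros i. unfold sumL in *; simpl. rewrite A3; auto. unfold pairc; lra.
     * unfold sumL in *; simpl. assert (w * - cl m * cj m + (w * cj m * cl m) = 0) by ring.
       lra. Qed.

Lemma gordan m : forall cols, G1 m cols \/ G2 m cols.
Proof.
 induction m as [|m IH]; intros cols.
 - destruct cols as [|c cols'].
   + left. exists (fun _ => 0). split; intros; [lra|destruct H].
   + right. exists ((1, c) :: nil). split; [|split].
     * intros wc0 [<-|[]]; simpl; split; [lra|left; auto].
     * exists (1, c); split; [left; auto|simpl; lra].
     * intros i Hi; lia.
 - destruct (IH (FMcols m cols)) as [[x' [Hx' Hp]] | [ys' [H1 [H2 H3]]]].
   + set (s := fun c : nat -> R => sumR m (fun i => x' i * c i)).
     assert (Hnonp : forall c, In c cols -> c m <= 0 -> 0 < s c).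
     { intros c Hc Hcm. apply Hp. unfold FMcols. apply in_or_app; left. apply in_filter_nonp; auto. }
     assert (Hpair : forall cj cl, In cj cols -> 0 < cj m -> In cl cols -> cl m < 0 ->
        0 < - cl m * s cj + cj m * s cl).
     { intros cj cl Hj Hjm Hl Hlm.
       assert (0 < s (pairc m cj cl)).
       { apply Hp. unfold FMcols. apply in_or_app; right. apply in_flat_map.
         exists cj; split; [apply in_filter_pos; auto|]. apply in_map. apply in_filter_neg; auto. }
       unfold s, pairc in *. rewrite <- !sumR_scal, <- sumR_plus.
       erewrite sumR_ext; [exact H|]. intros; simpl; ring. }
     destruct (interval_lemma (0 :: map (fun c => - s c / c m) (filter (posb m) cols))
                              (map (fun c => s c / (- c m)) (filter (negb' m) cols)))
       as [t [Ht1 Ht2]].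
     { intros a b Ha Hb. apply in_map_iff in Hb. destruct Hb as [cl [<- Hl]].
       apply in_filter_neg in Hl. destruct Hl as [Hl Hlm].
       assert (0 < s cl) by (apply Hnonp; auto; lra).
       destruct Ha as [<-|Ha].
       - apply Rdiv_lt_0_compat; lra.
       - apply in_map_iff in Ha. destruct Ha as [cj [<- Hj]]. apply in_filter_pos in Hj.
         destruct Hj as [Hj Hjm]. specialize (Hpair cj cl Hj Hjm Hl Hlm).
         apply (Rmult_lt_reg_r (cj m * - cl m)). nra.
         replace (- s cj / cj m * (cj m * - cl m)) with (- s cj * - cl m) by (field; lra).
         replace (s cl / - cl m * (cj m * - cl m)) with (s cl * cj m) by (field; lra).
         nra. }
     left. exists (fun i => if Nat.eqb i m then t else x' i). split.
     * intros i Hi. destruct (Nat.eqb_spec i m). subst. apply Rlt_le, Ht1; left; auto.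
       apply Hx'; lia.
     * intros c Hc. simpl. rewrite Nat.eqb_refl.
       rewrite (sumR_ext _ _ (fun i => x' i * c i)).
       2:{ intros i Hi. destruct (Nat.eqb_spec i m); [lia|auto]. }
       fold (s c).
       assert (Ht0 : 0 < t) by (apply Ht1; left; auto).
       destruct (Rtotal_order (c m) 0) as [Hn|[Hz|Hpo]].
       -- assert (t < s c / - c m). { apply Ht2. apply (in_map (fun c => s c / - c m)). apply in_filter_neg; auto. }
          assert (t * - c m < s c). { apply (Rmult_lt_compat_r (- c m)) in H; [|lra].
            replace (s c / - c m * - c m) with (s c) in H by (field; lra). auto. }
          lra.
       -- assert (0 < s c) by (apply Hnonp; auto; lra). rewrite Hz; lra.
       -- assert (- s c / c m < t). { apply Ht1. right. apply (in_map (fun c => - s c / c m)). apply in_filter_pos; auto. }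
          apply (Rmult_lt_compat_r (c m)) in H; [|lra].
          replace (- s c / c m * c m) with (- s c) in H by (field; lra). lra.
   + destruct (G2_lift m cols ys' H1) as [ys [A1 [A2 [A3 A4]]]].
     right. exists ys. split; [auto|split; [auto|]].
     intros i Hi. destruct (Nat.eq_dec i m). subst; auto. rewrite A3. apply H3; lia. Qed.

Lemma argmin_nat n (f : nat -> R) : (1 <= n)%nat -> exists j0, (j0 < n)%nat /\ forall j, (j < n)%nat -> f j0 <= f j.
Proof. induction n; intros Hn; [lia|]. destruct (Nat.eq_dec n 0).
 - subst. exists 0%nat; split; [lia|]. intros j Hj. replace j with 0%nat by lia; lra.
 - destruct IHn as [j0 [Hj0 H]]; [lia|]. destruct (Rle_dec (f j0) (f n)).
   + exists j0; split; [lia|]. intros j Hj. destruct (Nat.eq_dec j n); [subst; auto|apply H; lia].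
   + exists n; split; [lia|]. intros j Hj. destruct (Nat.eq_dec j n); [subst; lra|].
     specialize (H j ltac:(lia)); lra. Qed.

Lemma min_payoff_exists m n M x : (1 <= n)%nat -> exists w, is_min_payoff m n M x w.
Proof. intros Hn. set (a := fun j => sumR m (fun i => x i * M i j)).
 destruct (argmin_nat n a Hn) as [j0 [Hj0 H]]. exists (a j0). split.
 - exists (ej j0). split; [apply simplex_ej; auto|]. rewrite payoff_cols, sumR_ej; auto.
 - intros y Hy. rewrite payoff_cols. apply mix_ge; auto. Qed.

Lemma idx_conv n (col : nat -> nat -> R) ys :
  (forall wc, In wc ys -> 0 <= fst wc /\ In (snd wc) (map col (seq 0 n))) ->
  exists y : nat -> R, (forall j, 0 <= y j) /\
    (forall i, sumL ys i = sumR n (fun j => y j * col j i)) /\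
    sumR n y = fold_right (fun wc acc => fst wc + acc) 0 ys.
Proof. induction ys as [|[w c] ys IH]; intros H.
 - exists (fun _ => 0). split; [intros; lra|]. split; [intros i; simpl; rewrite (sumR_ext _ _ (fun _ => 0)) by (intros; ring); rewrite sumR_zero; reflexivity|].
   simpl; apply sumR_zero.
 - destruct IH as [y [Y1 [Y2 Y3]]]. intros; apply H; right; auto.
   destruct (H (w, c) (or_introl eq_refl)) as [Hw Hc]; simpl in Hw, Hc.
   apply in_map_iff in Hc. destruct Hc as [j0 [<- Hj0]]. apply in_seq in Hj0.
   exists (fun j => y j + w * ej j0 j). split.
   + intros j. unfold ej. specialize (Y1 j). destruct (Nat.eqb j j0); nra.
   + split.
     * intros i. unfold sumL in *; simpl. rewrite Y2.
       rewrite (sumR_ext n (fun j => (y j + w * ej j0 j) * col j i) (fun j => y j * col j i + w * (ej j0 j * col j i))) by (intros; ring).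
       rewrite sumR_plus, sumR_scal, sumR_ej by lia. ring.
     * simpl. rewrite sumR_plus, sumR_scal. rewrite <- Y3.
       replace (sumR n (ej j0)) with 1. ring. symmetry. apply (simplex_ej n j0). lia. Qed.

Lemma total_pos (ys : list (R * (nat -> R))) :
  (forall wc, In wc ys -> 0 <= fst wc) -> (exists wc, In wc ys /\ 0 < fst wc) ->
  0 < fold_right (fun wc acc => fst wc + acc) 0 ys.
Proof. induction ys as [|a ys IH]; intros H [wc [Hin Hp]]; [destruct Hin|].
 assert (N : 0 <= fold_right (fun wc acc => fst wc + acc) 0 ys).
 { clear -H. induction ys; simpl; [lra|]. assert (0 <= fst a0) by (apply H; right; left; auto).
   assert (0 <= fold_right (fun wc acc => fst wc + acc) 0 ys); [apply IHys; intros; apply H; simpl in *; tauto|lra]. }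
 simpl. destruct Hin as [<-|Hin]. lra.
 assert (0 <= fst a) by (apply H; left; auto).
 assert (0 < fold_right (fun wc acc => fst wc + acc) 0 ys); [apply IH; [intros; apply H; right; auto|exists wc; auto]|lra]. Qed.

Lemma normalize n (y : nat -> R) : (forall j, (j < n)%nat -> 0 <= y j) -> 0 < sumR n y ->
  simplex n (fun j => y j / sumR n y).
Proof. intros H Hs. split.
 - intros j Hj. unfold Rdiv. apply Rmult_le_pos; [auto|apply Rlt_le, Rinv_0_lt_compat; auto].
 - unfold Rdiv. rewrite (sumR_ext _ _ (fun j => / sumR n y * y j)) by (intros; ring).
   rewrite sumR_scal. field. lra. Qed.

Lemma minimax_y m n M v : (1 <= n)%nat -> IsVal m n M v ->
  exists y, simplex n y /\ forall i, (i < m)%nat -> sumR n (fun j => y j * M i j) <= v.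
Proof. intros Hn HV.
 destruct (gordan m (map (fun j i => M i j - v) (seq 0 n))) as [[x [Hx Hp]] | [ys [H1 [H2 H3]]]].
 - exfalso.
   assert (Hp' : forall j, (j < n)%nat -> 0 < sumR m (fun i => x i * (M i j - v))).
   { intros j Hj. apply (Hp (fun i => M i j - v)). apply (in_map (fun j i => M i j - v)). apply in_seq; lia. }
   set (s := sumR m x).
   assert (Hs : 0 < s).
   { assert (0 <= s) by (apply sumR_nonneg; auto). destruct (Req_dec s 0) as [E|E]; [|lra].
     specialize (Hp' 0%nat ltac:(lia)). rewrite (sumR_ext _ _ (fun _ => 0)) in Hp'.
     rewrite sumR_zero in Hp'; lra. intros i Hi. rewrite (sumR_nonneg_zero m x Hx E i Hi); ring. }
   set (xh := fun i => x i / s).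
   assert (Sx : simplex m xh) by (apply normalize; auto).
   set (a := fun j => sumR m (fun i => xh i * M i j)).
   assert (Ha : forall j, (j < n)%nat -> v < a j).
   { intros j Hj. specialize (Hp' j Hj).
     rewrite (sumR_ext _ _ (fun i => x i * M i j + - v * x i)) in Hp' by (intros; ring).
     rewrite sumR_plus, sumR_scal in Hp'. fold s in Hp'.
     unfold a, xh. unfold Rdiv. rewrite (sumR_ext _ _ (fun i => / s * (x i * M i j))) by (intros; ring).
     rewrite sumR_scal. apply (Rmult_lt_reg_l s); auto. field_simplify; lra. }
   destruct (min_payoff_exists m n M xh Hn) as [w Hw].
   destruct HV as [_ HV]. specialize (HV xh w Sx Hw).
   destruct Hw as [[y [Sy Ey]] _]. rewrite payoff_cols in Ey.
   destruct (argmin_nat n a Hn) as [j0 [Hj0 Hm]].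
   assert (a j0 <= w). { rewrite <- Ey. apply mix_ge; auto. }
   specialize (Ha j0 Hj0). lra.
 - destruct (idx_conv n (fun j i => M i j - v) ys H1) as [y [Y1 [Y2 Y3]]].
   assert (Hs : 0 < sumR n y). { rewrite Y3. apply total_pos; auto. intros; apply H1; auto. }
   exists (fun j => y j / sumR n y). split. apply normalize; auto.
   intros i Hi. specialize (H3 i Hi). rewrite Y2 in H3.
   rewrite (sumR_ext _ _ (fun j => y j * M i j + - v * y j)) in H3 by (intros; ring).
   rewrite sumR_plus, sumR_scal in H3.
   unfold Rdiv. rewrite (sumR_ext _ _ (fun j => / sumR n y * (y j * M i j))) by (intros; ring).
   rewrite sumR_scal. apply (Rmult_le_reg_l (sumR n y)); auto. field_simplify; lra. Qed.

Lemma IsVal_saddle m n M v : (1 <= n)%nat -> IsVal m n M v -> exists x y, saddle m n M v x y.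
Proof. intros Hn HV. destruct (minimax_y m n M v Hn HV) as [y [Sy Hy]].
 destruct HV as [[x [Sx [_ Hx]]] _]. exists x, y. split; [auto|split; [auto|split; auto]].
 intros j Hj. specialize (Hx (ej j) (simplex_ej n j Hj)). rewrite payoff_cols, sumR_ej in Hx; auto. Qed.

Lemma modA p a b : (a < p)%nat -> ((a + p * b) mod p = a)%nat.
Proof. intros H. rewrite Nat.mul_comm, Nat.Div0.mod_add. apply Nat.mod_small; auto. Qed.
Lemma divA p a b : (a < p)%nat -> ((a + p * b) / p = b)%nat.
Proof. intros H. rewrite Nat.mul_comm, Nat.div_add by lia. rewrite Nat.div_small; auto. Qed.

Definition tensor (p : nat) (u v : nat -> R) : nat -> R := fun j => u (j mod p)%nat * v (j / p)%nat.

Lemma tensor_sum p q u v F : (1 <= p)%nat ->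
  sumR (p * q) (fun j => tensor p u v j * F (j mod p)%nat (j / p)%nat) =
  sumR q (fun b => sumR p (fun a => u a * v b * F a b)).
Proof. intros Hp. rewrite sumR_mul_n. apply sumR_ext; intros b Hb. apply sumR_ext; intros a Ha.
 unfold tensor. rewrite modA, divA by auto. ring. Qed.

Lemma tensor_sum_l p q u v F : (1 <= p)%nat -> sumR q v = 1 ->
  sumR (p * q) (fun j => tensor p u v j * F (j mod p)%nat) = sumR p (fun a => u a * F a).
Proof. intros Hp Hv. rewrite (tensor_sum p q u v (fun a _ => F a)) by auto.
 rewrite sumR_swap. apply sumR_ext; intros a Ha.
 rewrite (sumR_ext _ _ (fun b => (u a * F a) * v b)) by (intros; ring). rewrite sumR_scal, Hv; ring. Qed.

Lemma tensor_sum_r p q u v F : (1 <= p)%nat -> sumR p u = 1 ->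
  sumR (p * q) (fun j => tensor p u v j * F (j / p)%nat) = sumR q (fun b => v b * F b).
Proof. intros Hp Hu. rewrite (tensor_sum p q u v (fun _ b => F b)) by auto.
 apply sumR_ext; intros b Hb.
 rewrite (sumR_ext _ _ (fun a => (v b * F b) * u a)) by (intros; ring). rewrite sumR_scal, Hu; ring. Qed.

Lemma simplex_pos n x : simplex n x -> (1 <= n)%nat.
Proof. intros [_ H]. destruct n; simpl in H; [lra|lia]. Qed.

Lemma simplex_tensor p q u v : simplex p u -> simplex q v -> simplex (p * q) (tensor p u v).
Proof. intros Su Sv. pose proof (simplex_pos _ _ Su). pose proof (simplex_pos _ _ Sv).
 destruct Su as [Hu Su]; destruct Sv as [Hv Sv]. split.
 - intros j Hj. unfold tensor. apply Rmult_le_pos; [apply Hu|apply Hv].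
   apply Nat.mod_upper_bound; lia. apply Nat.Div0.div_lt_upper_bound; lia.
 - pose proof (tensor_sum_l p q u v (fun _ => 1) ltac:(lia) Sv).
   simpl in H1. rewrite (sumR_ext p (fun a => u a * 1) (fun a => u a)) in H1 by (intros; ring).
   rewrite (sumR_ext _ (tensor p u v) (fun j => tensor p u v j * 1)) by (intros; ring).
   rewrite H1. exact Su. Qed.

Lemma saddle_ext m n M M' v x y : saddle m n M v x y ->
  (forall i j, (i < m)%nat -> (j < n)%nat -> M i j = M' i j) -> saddle m n M' v x y.
Proof. intros (Sx & Sy & Hc & Hr) E. split; [auto|split; [auto|split]].
 - intros j Hj. rewrite (sumR_ext _ _ (fun i => x i * M i j)) by (intros; rewrite E; auto). auto.
 - intros i Hi. rewrite (sumR_ext _ _ (fun j => y j * M i j)) by (intros; rewrite E; auto). auto. Qed.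

Lemma saddle_neg m n M v x y : saddle m n M v x y -> saddle n m (fun j i => - M i j) (- v) y x.
Proof. intros (Sx & Sy & Hc & Hr). split; [auto|split; [auto|split]].
 - intros i Hi. rewrite (sumR_ext _ _ (fun j => - (y j * M i j))) by (intros; ring).
   rewrite sumR_opp. specialize (Hr i Hi). lra.
 - intros j Hj. rewrite (sumR_ext _ _ (fun i => - (x i * M i j))) by (intros; ring).
   rewrite sumR_opp. specialize (Hc j Hj). lra. Qed.

Definition Cmax (mA nA : nat) (A B : nat -> nat -> R) : nat -> nat -> R :=
  fun i j => if Nat.ltb i mA then A i (j mod nA)%nat else B (i - mA)%nat (j / nA)%nat.

Definition padL (mA : nat) (xA : nat -> R) : nat -> R := fun i => if Nat.ltb i mA then xA i else 0.
Definition padR (mA : nat) (xB : nat -> R) : nat -> R := fun i => if Nat.ltb i mA then 0 else xB (i - mA)%nat.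

Lemma simplex_padL mA mB x : simplex mA x -> simplex (mA + mB) (padL mA x).
Proof. intros [H S]. split.
 - intros i Hi. unfold padL. destruct (Nat.ltb_spec i mA); [apply H; auto|lra].
 - rewrite sumR_add_n. rewrite (sumR_ext mB _ (fun _ => 0)).
   rewrite sumR_zero, <- S. rewrite Rplus_0_r. apply sumR_ext; intros. unfold padL.
   destruct (Nat.ltb_spec i mA); [auto|lia].
   intros. unfold padL. destruct (Nat.ltb_spec (mA + i) mA); [lia|auto]. Qed.

Lemma simplex_padR mA mB x : simplex mB x -> simplex (mA + mB) (padR mA x).
Proof. intros [H S]. split.
 - intros i Hi. unfold padR. destruct (Nat.ltb_spec i mA); [lra|apply H; lia].
 - rewrite sumR_add_n. rewrite (sumR_ext mA _ (fun _ => 0)).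
   rewrite sumR_zero, <- S. rewrite Rplus_0_l. apply sumR_ext; intros. unfold padR.
   destruct (Nat.ltb_spec (mA + i) mA); [lia|]. f_equal; lia.
   intros. unfold padR. destruct (Nat.ltb_spec i mA); [auto|lia]. Qed.

Lemma saddle_max mA nA mB nB A B a b xA yA xB yB :
  saddle mA nA A a xA yA -> saddle mB nB B b xB yB ->
  exists x y, saddle (mA + mB) (nA * nB) (Cmax mA nA A B) (Rmax a b) x y.
Proof. intros HA HB. pose proof HA as (SxA & SyA & HcA & HrA). pose proof HB as (SxB & SyB & HcB & HrB).
 pose proof (simplex_pos _ _ SyA) as HnA. pose proof (simplex_pos _ _ SyB) as HnB.
 assert (Rows : forall i, (i < mA + mB)%nat ->
   sumR (nA * nB) (fun j => tensor nA yA yB j * Cmax mA nA A B i j) <= Rmax a b).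
 { intros i Hi. unfold Cmax. destruct (Nat.ltb_spec i mA).
   - rewrite (tensor_sum_l nA nB yA yB (fun ja => A i ja)) by (auto; apply SyB).
     specialize (HrA i H). pose proof (Rmax_l a b). lra.
   - rewrite (tensor_sum_r nA nB yA yB (fun jb => B (i - mA)%nat jb)) by (auto; apply SyA).
     specialize (HrB (i - mA)%nat ltac:(lia)). pose proof (Rmax_r a b). lra. }
 destruct (Rle_dec b a).
 - exists (padL mA xA), (tensor nA yA yB). split; [apply simplex_padL; auto|].
   split; [apply simplex_tensor; auto|]. split; [|auto].
   intros j Hj. rewrite Rmax_left by lra. rewrite sumR_add_n.
   rewrite (sumR_ext mB _ (fun _ => 0)). rewrite sumR_zero, Rplus_0_r.
   rewrite (sumR_ext mA _ (fun i => xA i * A i (j mod nA)%nat)). apply HcA.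
   apply Nat.mod_upper_bound; lia.
   intros i Hi; unfold padL, Cmax. destruct (Nat.ltb_spec i mA); [auto|lia].
   intros i Hi; unfold padL. destruct (Nat.ltb_spec (mA + i) mA); [lia|ring].
 - exists (padR mA xB), (tensor nA yA yB). split; [apply simplex_padR; auto|].
   split; [apply simplex_tensor; auto|]. split; [|auto].
   intros j Hj. rewrite Rmax_right by lra. rewrite sumR_add_n.
   rewrite (sumR_ext mA _ (fun _ => 0)). rewrite sumR_zero, Rplus_0_l.
   rewrite (sumR_ext mB _ (fun i => xB i * B i (j / nA)%nat)). apply HcB.
   apply Nat.Div0.div_lt_upper_bound; lia.
   intros i Hi; unfold padR, Cmax. destruct (Nat.ltb_spec (mA + i) mA); [lia|].
   replace (mA + i - mA)%nat with i by lia. auto.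
   intros i Hi; unfold padR. destruct (Nat.ltb_spec i mA); [ring|lia]. Qed.

Definition Cconv (lam : R) (mA nA : nat) (A B : nat -> nat -> R) : nat -> nat -> R :=
  fun i j => lam * A (i mod mA)%nat (j mod nA)%nat + (1 - lam) * B (i / mA)%nat (j / nA)%nat.

Lemma saddle_conv lam mA nA mB nB A B a b xA yA xB yB : 0 <= lam <= 1 ->
  saddle mA nA A a xA yA -> saddle mB nB B b xB yB ->
  saddle (mA * mB) (nA * nB) (Cconv lam mA nA A B) (lam * a + (1 - lam) * b)
    (tensor mA xA xB) (tensor nA yA yB).
Proof. intros Hl HA HB. pose proof HA as (SxA & SyA & HcA & HrA). pose proof HB as (SxB & SyB & HcB & HrB).
 pose proof (simplex_pos _ _ SyA) as HnA. pose proof (simplex_pos _ _ SyB) as HnB.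
 pose proof (simplex_pos _ _ SxA) as HmA. pose proof (simplex_pos _ _ SxB) as HmB.
 split; [apply simplex_tensor; auto|]. split; [apply simplex_tensor; auto|]. split.
 - intros j Hj. unfold Cconv.
   rewrite (sumR_ext _ _ (fun i => lam * (tensor mA xA xB i * A (i mod mA)%nat (j mod nA)%nat) +
       (1 - lam) * (tensor mA xA xB i * B (i / mA)%nat (j / nA)%nat))) by (intros; ring).
   rewrite sumR_plus, !sumR_scal.
   rewrite (tensor_sum_l mA mB xA xB (fun a => A a (j mod nA)%nat)) by (auto; apply SxB).
   rewrite (tensor_sum_r mA mB xA xB (fun b => B b (j / nA)%nat)) by (auto; apply SxA).
   assert (a <= sumR mA (fun a0 => xA a0 * A a0 (j mod nA)%nat)) by (apply HcA; apply Nat.mod_upper_bound; lia).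
   assert (b <= sumR mB (fun b0 => xB b0 * B b0 (j / nA)%nat)) by (apply HcB; apply Nat.Div0.div_lt_upper_bound; lia).
   nra.
 - intros i Hi. unfold Cconv.
   rewrite (sumR_ext _ _ (fun j => lam * (tensor nA yA yB j * A (i mod mA)%nat (j mod nA)%nat) +
       (1 - lam) * (tensor nA yA yB j * B (i / mA)%nat (j / nA)%nat))) by (intros; ring).
   rewrite sumR_plus, !sumR_scal.
   rewrite (tensor_sum_l nA nB yA yB (fun a => A (i mod mA)%nat a)) by (auto; apply SyB).
   rewrite (tensor_sum_r nA nB yA yB (fun b => B (i / mA)%nat b)) by (auto; apply SyA).
   assert (sumR nA (fun a0 => yA a0 * A (i mod mA)%nat a0) <= a) by (apply HrA; apply Nat.mod_upper_bound; lia).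
   assert (sumR nB (fun b0 => yB b0 * B (i / mA)%nat b0) <= b) by (apply HrB; apply Nat.Div0.div_lt_upper_bound; lia).
   nra. Qed.

Lemma D0_ext k f f' : D0 k f -> (forall p, simplex k p -> f p = f' p) -> D0 k f'.
Proof. intros [m [n [G [Hm [Hn [HG HV]]]]]] E. exists m, n, G. split; [auto|split; [auto|split; [auto|]]].
 intros p Sp. rewrite <- E by auto. auto. Qed.

Lemma D0_neg k f : D0 k f -> D0 k (fun p => - f p).
Proof. intros [m [n [G [Hm [Hn [HG HV]]]]]].
 exists n, m, (fun l i j => - G l j i). split; [auto|split; [auto|split]].
 - intros l i j Hl Hi Hj. specialize (HG l j i Hl Hj Hi). lra.
 - intros p Sp. destruct (IsVal_saddle _ _ _ _ Hn (HV p Sp)) as [x [y S]].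
   apply saddle_IsVal with y x. eapply saddle_ext; [apply saddle_neg; exact S|].
   intros i j _ _. simpl. rewrite <- sumR_opp. apply sumR_ext; intros; ring. Qed.

Lemma D0_max k f g : D0 k f -> D0 k g -> D0 k (fun p => Rmax (f p) (g p)).
Proof. intros [mA [nA [GA [HmA [HnA [HGA HVA]]]]]] [mB [nB [GB [HmB [HnB [HGB HVB]]]]]].
 exists (mA + mB)%nat, (nA * nB)%nat, (fun l => Cmax mA nA (GA l) (GB l)).
 split; [lia|split; [nia|split]].
 - intros l i j Hl Hi Hj. unfold Cmax. destruct (Nat.ltb_spec i mA).
   + apply HGA; auto. apply Nat.mod_upper_bound; lia.
   + apply HGB; [auto|lia|]. apply Nat.Div0.div_lt_upper_bound; lia.
 - intros p Sp. destruct (IsVal_saddle _ _ _ _ HnA (HVA p Sp)) as [xA [yA SA]].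
   destruct (IsVal_saddle _ _ _ _ HnB (HVB p Sp)) as [xB [yB SB]].
   destruct (saddle_max _ _ _ _ _ _ _ _ _ _ _ _ SA SB) as [x [y S]].
   apply saddle_IsVal with x y. eapply saddle_ext; [exact S|].
   intros i j _ _. unfold Cmax. destruct (Nat.ltb i mA); reflexivity. Qed.

Lemma D0_conv k f g lam : 0 <= lam <= 1 -> D0 k f -> D0 k g ->
  D0 k (fun p => lam * f p + (1 - lam) * g p).
Proof. intros Hl [mA [nA [GA [HmA [HnA [HGA HVA]]]]]] [mB [nB [GB [HmB [HnB [HGB HVB]]]]]].
 exists (mA * mB)%nat, (nA * nB)%nat, (fun l => Cconv lam mA nA (GA l) (GB l)).
 split; [nia|split; [nia|split]].
 - intros l i j Hl' Hi Hj. unfold Cconv.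
   assert (-1 <= GA l (i mod mA)%nat (j mod nA)%nat <= 1).
   { apply HGA; auto; apply Nat.mod_upper_bound; lia. }
   assert (-1 <= GB l (i / mA)%nat (j / nA)%nat <= 1).
   { apply HGB; auto; apply Nat.Div0.div_lt_upper_bound; lia. }
   nra.
 - intros p Sp. destruct (IsVal_saddle _ _ _ _ HnA (HVA p Sp)) as [xA [yA SA]].
   destruct (IsVal_saddle _ _ _ _ HnB (HVB p Sp)) as [xB [yB SB]].
   pose proof (saddle_conv lam _ _ _ _ _ _ _ _ _ _ _ _ Hl SA SB) as S.
   eapply saddle_IsVal. eapply saddle_ext; [exact S|].
   intros i j _ _. unfold Cconv. rewrite <- !sumR_scal, <- sumR_plus. apply sumR_ext; intros; ring. Qed.

Lemma D0_min k f g : D0 k f -> D0 k g -> D0 k (fun p => Rmin (f p) (g p)).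
Proof. intros Hf Hg. eapply D0_ext.
 apply D0_neg, (D0_max k (fun p => - f p) (fun p => - g p)); apply D0_neg; assumption.
 intros p _. cbv beta. unfold Rmax, Rmin. destruct (Rle_dec (- f p) (- g p)), (Rle_dec (f p) (g p)); lra. Qed.

Lemma D0_lin k (al : nat -> R) : (forall l, (l < k)%nat -> -1 <= al l <= 1) ->
  D0 k (fun p => sumR k (fun l => p l * al l)).
Proof. intros H. exists 1%nat, 1%nat, (fun l _ _ => al l). split; [lia|split; [lia|split]].
 - intros; auto.
 - intros p Sp. apply saddle_IsVal with (ej 0) (ej 0).
   split; [apply simplex_ej; lia|split; [apply simplex_ej; lia|split]].
   + intros j Hj. simpl. unfold ej; simpl. lra.
   + intros i Hi. simpl. unfold ej; simpl. lra. Qed.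

Lemma D0_scale k f lam : 0 <= lam <= 1 -> D0 k f -> D0 k (fun p => lam * f p).
Proof. intros Hl Hf. eapply D0_ext. apply (D0_conv k f (fun p => sumR k (fun l => p l * 0)) lam Hl Hf).
 apply D0_lin. intros; lra. intros p _. cbv beta. rewrite (sumR_ext k (fun l => p l * 0) (fun _ => 0)) by (intros; ring). rewrite sumR_zero. ring. Qed.

Fixpoint toT (n : nat) (p : nat -> R) : Compactness.Tn n R :=
  match n return Compactness.Tn n R with
  | O => tt
  | S n' => (p O, toT n' (fun i => p (S i)))
  end.

Fixpoint fromT (n : nat) : Compactness.Tn n R -> nat -> R :=
  match n return Compactness.Tn n R -> nat -> R with
  | O => fun _ _ => 0
  | S n' => fun t i => match i with O => fst t | S i' => fromT n' (snd t) i' end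
  end.

Lemma bounded_toT n x : (forall i, (i < n)%nat -> 0 <= x i <= 1) ->
  Compactness.bounded_n n (toT n (fun _ => 0)) (toT n (fun _ => 1)) (toT n x).
Proof. revert x; induction n; intros x H; simpl; auto. split.
 apply H; lia. apply (IHn (fun i => x (S i))). intros; apply H; lia. Qed.

Lemma close_toT n r x t : Compactness.close_n n r (toT n x) t ->
  forall i, (i < n)%nat -> Rabs (x i - fromT n t i) < r.
Proof. revert x; induction n; intros x H i Hi; [lia|]. destruct t as [t1 t2]. simpl in H.
 destruct H as [H1 H2]. destruct i; simpl; auto. apply (IHn t2 (fun i => x (S i))); auto; lia. Qed.

Lemma coord_le_sum n x i : (forall j, (j < n)%nat -> 0 <= x j) -> (i < n)%nat -> x i <= sumR n x.
Proof. induction n; intros H Hi; [lia|]. simpl. destruct (Nat.eq_dec i n).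
 subst. assert (0 <= sumR n x) by (apply sumR_nonneg; intros; apply H; lia). lra.
 assert (x i <= sumR n x) by (apply IHn; [intros; apply H; lia|lia]). assert (0 <= x n) by (apply H; lia). lra. Qed.

Lemma simplex_coord k x i : simplex k x -> (i < k)%nat -> 0 <= x i <= 1.
Proof. intros [H S] Hi. split; auto. rewrite <- S. apply coord_le_sum; auto. Qed.

Lemma sumR_const n c : sumR n (fun _ => c) = INR n * c.
Proof. induction n; simpl sumR; [simpl; lra|]. rewrite IHn, S_INR; ring. Qed.

Lemma simplex_closed k y : ~ simplex k y -> exists r, 0 < r /\
  forall x, simplex k x -> ~ (forall i, (i < k)%nat -> Rabs (x i - y i) < r).
Proof. intros Hn. unfold simplex in Hn. apply not_and_or in Hn. destruct Hn as [Hn|Hn].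
 - apply not_all_ex_not in Hn. destruct Hn as [i Hi]. apply imply_to_and in Hi. destruct Hi as [Hi Hy].
   exists (- y i). split; [lra|]. intros x [Hx _] Hc. specialize (Hc i Hi). specialize (Hx i Hi).
   rewrite Rabs_right in Hc by lra. lra.
 - set (D := Rabs (sumR k y - 1)).
   assert (HD : 0 < D) by (apply Rabs_pos_lt; lra).
   exists (D / (INR k + 1)). split. { apply Rdiv_lt_0_compat; [lra|]. pose proof (pos_INR k); lra. }
   intros x [Hx Sx] Hc.
   assert (Hk : 0 <= INR k) by apply pos_INR.
   assert (U : sumR k (fun i => x i - y i) <= sumR k (fun _ => D / (INR k + 1))).
   { apply sumR_le; intros i Hi. specialize (Hc i Hi). apply Rabs_def2 in Hc. lra. }
   assert (L : sumR k (fun _ => - (D / (INR k + 1))) <= sumR k (fun i => x i - y i)).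
   { apply sumR_le; intros i Hi. specialize (Hc i Hi). apply Rabs_def2 in Hc. lra. }
   rewrite !sumR_const in U, L.
   rewrite (sumR_ext _ _ (fun i => x i + - y i)) in U, L by (intros; ring).
   rewrite sumR_plus, sumR_opp, Sx in U, L.
   assert (INR k * (D / (INR k + 1)) < D).
   { apply (Rmult_lt_reg_r (INR k + 1)); [lra|]. field_simplify; nra. }
   unfold D in *. destruct (Rabs_pos (sumR k y - 1)).
   unfold Rabs in *. destruct (Rcase_abs (sumR k y - 1)); lra. lra. Qed.

Lemma filter_classic {A} (P : A -> Prop) (l : list A) : exists l',
  (forall x, In x l' -> P x /\ In x l) /\ (forall x, In x l -> P x -> In x l').
Proof. induction l as [|a l IH].
 - exists nil; split; intros x []; auto.
 - destruct IH as [l' [H1 H2]]. destruct (classic (P a)).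
   + exists (a :: l'). split.
     * intros x [<-|Hx]; [split; [auto|left; auto]|]. destruct (H1 x Hx); split; [auto|right; auto].
     * intros x [<-|Hx] Px; [left; auto|right; auto].
   + exists l'. split.
     * intros x Hx. destruct (H1 x Hx); split; [auto|right; auto].
     * intros x [<-|Hx] Px; [contradiction|auto]. Qed.

Definition Qg k (rho : (nat -> R) -> R) (y : nat -> R) (r : R) : Prop :=
  0 < r /\ (simplex k y -> r <= rho y) /\
  (~ simplex k y -> forall x, simplex k x -> ~ (forall i, (i < k)%nat -> Rabs (x i - y i) < r)).

Lemma gauge_net k (rho : (nat -> R) -> R) : (forall v, simplex k v -> 0 < rho v) ->
  exists L, (forall v, In v L -> simplex k v) /\
    forall x, simplex k x -> exists v, In v L /\ forall i, (i < k)%nat -> Rabs (x i - v i) < rho v.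
Proof. intros Hrho.
 assert (Hex : forall t : Compactness.Tn k R, exists r, Qg k rho (fromT k t) r).
 { intros t. destruct (classic (simplex k (fromT k t))) as [Hs|Hs].
   - exists (rho (fromT k t)). split; [auto|split; [intros; lra|intros; contradiction]].
   - destruct (simplex_closed k _ Hs) as [r [Hr Hc]]. exists r. split; [auto|split; [intros; contradiction|auto]]. }
 set (delta := fun t => let s := constructive_indefinite_description _ (Hex t) in
                 mkposreal (proj1_sig s) (proj1 (proj2_sig s))).
 assert (Hd : forall t, Qg k rho (fromT k t) (pos (delta t))).
 { intros t. unfold delta. simpl. destruct (constructive_indefinite_description _ (Hex t)); simpl; auto. }
 pose proof (Compactness.compactness_list k (toT k (fun _ => 0)) (toT k (fun _ => 1)) delta) as HC.
 apply NNPP; intro Hno; apply HC; intros [l Hl]; apply Hno.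
 destruct (filter_classic (simplex k) (map (fromT k) l)) as [L [HL1 HL2]].
 exists L. split; [intros v Hv; apply HL1; auto|].
 intros x Sx.
 destruct (Hl (toT k x)) as [t [Ht [_ Hcl]]].
 { apply bounded_toT. intros; apply (simplex_coord k); auto. }
 pose proof (close_toT _ _ _ _ Hcl) as Hc.
 destruct (Hd t) as [_ [Q1 Q2]].
 destruct (classic (simplex k (fromT k t))) as [Hs|Hs].
 - exists (fromT k t). split. apply HL2; auto. apply in_map; auto.
   intros i Hi. specialize (Hc i Hi). specialize (Q1 Hs). lra.
 - exfalso. apply (Q2 Hs x Sx). auto. Qed.

Lemma list_min_pos (rho : (nat -> R) -> R) (L : list (nat -> R)) :
  (forall v, In v L -> 0 < rho v) ->
  exists d, 0 < d /\ forall v, In v L -> d <= rho v.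
Proof. induction L as [|a L IH]; intros H.
 - exists 1; split; [lra|intros _ []].
 - destruct IH as [d [Hd Hd']]. intros; apply H; right; auto.
   exists (Rmin d (rho a)). split. apply Rmin_pos; auto. apply H; left; auto.
   intros v [<-|Hv]. apply Rmin_r. apply Rle_trans with d; [apply Rmin_l|auto]. Qed.

Lemma unif_cont k h : continuous_on_simplex k h -> forall e, 0 < e -> exists d, 0 < d /\
  forall x y, simplex k x -> simplex k y -> (forall i, (i < k)%nat -> Rabs (x i - y i) < d) ->
    Rabs (h x - h y) < e.
Proof. intros Hc e He.
 assert (Hex : forall v, exists d, 0 < d /\ (simplex k v -> forall q, simplex k q ->
    (forall i, (i < k)%nat -> Rabs (v i - q i) < d) -> Rabs (h v - h q) < e / 2)).
 { intros v. destruct (classic (simplex k v)) as [Hv|Hv].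
   - destruct (Hc v Hv (e/2) ltac:(lra)) as [d [Hd H]]. exists d; split; auto.
   - exists 1; split; [lra|intros; contradiction]. }
 set (rho := fun v => proj1_sig (constructive_indefinite_description _ (Hex v)) / 2).
 assert (Hr : forall v, 0 < 2 * rho v /\ (simplex k v -> forall q, simplex k q ->
    (forall i, (i < k)%nat -> Rabs (v i - q i) < 2 * rho v) -> Rabs (h v - h q) < e / 2)).
 { intros v. unfold rho. destruct (constructive_indefinite_description _ (Hex v)) as [d [Hd H]]; simpl.
   replace (2 * (d / 2)) with d by field. split; auto. }
 destruct (gauge_net k rho) as [L [HL1 HL2]].
 { intros v _. destruct (Hr v); lra. }
 destruct (list_min_pos rho L) as [d [Hd Hd']].
 { intros v _. destruct (Hr v); lra. }
 exists d. split; auto. intros x y Sx Sy Hxy.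
 destruct (HL2 x Sx) as [v [Hv Hxv]].
 destruct (Hr v) as [_ Hr2]. specialize (Hd' v Hv). specialize (HL1 v Hv).
 assert (A1 : Rabs (h v - h x) < e / 2).
 { apply Hr2; auto. intros i Hi. specialize (Hxv i Hi). rewrite Rabs_minus_sym. lra. }
 assert (A2 : Rabs (h v - h y) < e / 2).
 { apply Hr2; auto. intros i Hi. specialize (Hxv i Hi). specialize (Hxy i Hi).
   replace (v i - y i) with ((x i - y i) - (x i - v i)) by ring.
   pose proof (Rabs_triang (x i - y i) (- (x i - v i))). rewrite Rabs_Ropp in H. unfold Rminus at 1. lra. }
 replace (h x - h y) with ((h v - h y) - (h v - h x)) by ring.
 pose proof (Rabs_triang (h v - h y) (- (h v - h x))). rewrite Rabs_Ropp in H. unfold Rminus at 1. lra. Qed.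

Lemma bounded_h k h : continuous_on_simplex k h -> exists B, 0 <= B /\
  forall p, simplex k p -> Rabs (h p) <= B.
Proof. intros Hc. destruct (unif_cont k h Hc 1 ltac:(lra)) as [d [Hd Hu]].
 destruct (gauge_net k (fun _ => d)) as [L [HL1 HL2]]; [intros; auto|].
 set (B := fold_right (fun v acc => Rabs (h v) + acc) 1 L).
 assert (HB : 1 <= B /\ forall v, In v L -> Rabs (h v) + 1 <= B).
 { unfold B; clear. induction L as [|a L [IH1 IH2]]; simpl.
   - split; [lra|intros _ []].
   - pose proof (Rabs_pos (h a)). split; [lra|]. intros v [<-|Hv]; [lra|]. specialize (IH2 v Hv). lra. }
 exists B. split; [lra|]. intros p Sp. destruct (HL2 p Sp) as [v [Hv Hpv]].
 assert (Rabs (h p - h v) < 1) by (apply Hu; auto).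
 destruct HB as [_ HB]. specialize (HB v Hv).
 pose proof (Rabs_triang (h p - h v) (h v)). replace (h p - h v + h v) with (h p) in H0 by ring. lra. Qed.

Lemma Rabs_le_inv x c : Rabs x <= c -> - c <= x <= c.
Proof. unfold Rabs. destruct (Rcase_abs x); intros; lra. Qed.

Fixpoint dmax (n : nat) (p v : nat -> R) : R :=
  match n with O => 0 | S n' => Rmax (dmax n' p v) (Rabs (p n' - v n')) end.

Lemma dmax_ge0 n p v : 0 <= dmax n p v.
Proof. induction n; simpl; [lra|]. apply Rle_trans with (dmax n p v); auto. apply Rmax_l. Qed.

Lemma dmax_ge n p v i : (i < n)%nat -> Rabs (p i - v i) <= dmax n p v.
Proof. induction n; intros Hi; [lia|]. simpl. destruct (Nat.eq_dec i n).
 subst; apply Rmax_r. apply Rle_trans with (dmax n p v); [apply IHn; lia|apply Rmax_l]. Qed.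

Lemma dmax_lt n p v c : 0 < c -> (forall i, (i < n)%nat -> Rabs (p i - v i) < c) -> dmax n p v < c.
Proof. induction n; intros Hc H; simpl; auto. apply Rmax_lub_lt. apply IHn; auto. apply H; lia. Qed.

Lemma Rmax_aff a K C x y : 0 <= K -> 0 < C ->
  (a + K * Rmax x y) / C = Rmax ((a + K * x) / C) ((a + K * y) / C).
Proof. intros HK HC. unfold Rdiv. set (ic := / C). assert (0 < ic) by (apply Rinv_0_lt_compat; auto).
 assert (0 <= K * ic) by nra.
 unfold Rmax. destruct (Rle_dec x y), (Rle_dec ((a + K * x) * ic) ((a + K * y) * ic)); try reflexivity.
 - assert (K * ic * (y - x) >= 0) by nra. apply Rle_antisym; nra.
 - assert (K * ic * (x - y) >= 0) by nra. apply Rle_antisym; nra. Qed.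

Lemma Rabs_max t : Rabs t = Rmax t (- t).
Proof. unfold Rabs, Rmax. destruct (Rcase_abs t), (Rle_dec t (- t)); lra. Qed.

Lemma div_bound x C : 0 < C -> - C <= x <= C -> -1 <= x / C <= 1.
Proof. intros HC [H1 H2]. split.
 - apply (Rmult_le_reg_r C); auto. unfold Rdiv. rewrite Rmult_assoc, Rinv_l by lra. lra.
 - apply (Rmult_le_reg_r C); auto. unfold Rdiv. rewrite Rmult_assoc, Rinv_l by lra. lra. Qed.

Section Phi.
Variables (k : nat) (B K C a : R) (v : nat -> R).
Hypotheses (HB : Rabs a <= B) (HK : 0 <= K) (HC : B + 2 * K + 1 <= C)
  (Hv : forall i, (i < k)%nat -> 0 <= v i <= 1).

Lemma D0_affj j sg : (j < k)%nat -> Rabs sg <= K ->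
  D0 k (fun p => (a + sg * (p j - v j)) / C).
Proof. intros Hj Hs. assert (0 <= B) by (pose proof (Rabs_pos a); lra).
 eapply D0_ext. apply (D0_lin k (fun l => (a - sg * v j) / C + (sg / C) * ej j l)).
 - intros l Hl.
   replace (sg / C * ej j l) with ((sg * ej j l) / C) by (field; lra).
   rewrite <- Rdiv_plus_distr. apply div_bound; [lra|].
   destruct (Hv j Hj). apply Rabs_le_inv in HB. apply Rabs_le_inv in Hs.
   assert (- K <= sg * v j <= K) by (split; nra).
   assert (- K <= sg * ej j l <= K) by (unfold ej; destruct (Nat.eqb l j); split; nra).
   lra.
 - intros p [Hp Sp]. cbv beta.
   rewrite (sumR_ext _ _ (fun l => (a - sg * v j) / C * p l + sg / C * (ej j l * p l))) by (intros; ring).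
   rewrite sumR_plus, !sumR_scal, Sp, sumR_ej by auto. field. lra. Qed.

Lemma D0_phi n : (n <= k)%nat -> D0 k (fun p => (a + K * dmax n p v) / C).
Proof. assert (0 <= B) by (pose proof (Rabs_pos a); lra).
 induction n; intros Hn.
 - eapply D0_ext. apply (D0_lin k (fun _ => a / C)).
   + intros; apply div_bound; [lra|]. apply Rabs_le_inv in HB; lra.
   + intros p [Hp Sp]. cbv beta. rewrite (sumR_ext _ _ (fun l => a / C * p l)) by (intros; ring).
     rewrite sumR_scal, Sp. simpl. field. lra.
 - apply D0_ext with (f := fun p => Rmax ((a + K * dmax n p v) / C)
       (Rmax ((a + K * (p n - v n)) / C) ((a + - K * (p n - v n)) / C))).
   apply D0_max; [apply IHn; lia|apply D0_max].
   apply D0_affj; [lia|rewrite Rabs_right; lra].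
   apply D0_affj; [lia|rewrite Rabs_Ropp, Rabs_right; lra].
   intros p _. cbv beta. simpl dmax. rewrite Rmax_aff by lra. f_equal.
   rewrite Rabs_max, Rmax_aff by lra. f_equal; f_equal; ring. Qed.
End Phi.

Definition gfun (F : (nat -> R) -> (nat -> R) -> R) (v0 : nat -> R) (L : list (nat -> R)) (p : nat -> R) :=
  fold_right (fun v acc => Rmin (F v p) acc) (F v0 p) L.

Lemma D0_gfun k F v0 L : (forall v, In v (v0 :: L) -> D0 k (F v)) -> D0 k (gfun F v0 L).
Proof. induction L as [|a L IH]; intros H; unfold gfun; simpl.
 - apply H; left; auto.
 - apply (D0_min k (F a) (gfun F v0 L)). apply H; right; left; auto.
   apply IH. intros v [<-|Hv]; apply H; [left|right; right]; auto. Qed.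

Lemma gfun_le F v0 L p v : In v (v0 :: L) -> gfun F v0 L p <= F v p.
Proof. induction L as [|a L IH]; unfold gfun; simpl.
 - intros [<-|[]]; lra.
 - intros [<-|[<-|Hv]].
   + apply Rle_trans with (gfun F v0 L p); [apply Rmin_r|apply IH; left; auto].
   + apply Rmin_l.
   + apply Rle_trans with (gfun F v0 L p); [apply Rmin_r|apply IH; right; auto]. Qed.

Lemma gfun_ge F v0 L p c : (forall v, In v (v0 :: L) -> c <= F v p) -> c <= gfun F v0 L p.
Proof. induction L as [|a L IH]; unfold gfun; simpl; intros H.
 - apply H; left; auto.
 - apply Rmin_glb. apply H; right; left; auto. apply IH. intros v [<-|Hv]; apply H; [left|right; right]; auto. Qed.

Lemma density k h : (1 <= k)%nat -> continuous_on_simplex k h -> forall eps, 0 < eps ->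
  exists C g, D0 k g /\ forall p, simplex k p -> Rabs (h p - C * g p) <= eps.
Proof. intros Hk Hc eps Heps. set (e := eps / 2).
 destruct (unif_cont k h Hc e ltac:(unfold e; lra)) as [dl [Hdl Hu]].
 destruct (bounded_h k h Hc) as [B [HB0 HB]].
 set (K := (2 * B + e) / dl).
 assert (HK : 0 <= K). { unfold K. apply Rlt_le, Rdiv_lt_0_compat; unfold e; lra. }
 assert (HKd : K * dl = 2 * B + e) by (unfold K; field; lra).
 set (eta := Rmin (dl / 2) (e / (K + 1))).
 assert (Heta : 0 < eta) by (apply Rmin_pos; [lra|apply Rdiv_lt_0_compat; unfold e; lra]).
 assert (Heta1 : eta <= dl / 2) by apply Rmin_l.
 assert (Heta2 : K * eta <= e).
 { apply Rle_trans with (K * (e / (K + 1))). apply Rmult_le_compat_l; auto. apply Rmin_r.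
   apply (Rmult_le_reg_r (K + 1)); [lra|]. field_simplify; [|lra]. unfold e; nra. }
 destruct (gauge_net k (fun _ => eta)) as [L [HL1 HL2]]; [intros; auto|].
 set (C := B + 2 * K + 1).
 assert (HC : 0 < C) by (unfold C; lra).
 set (F := fun v p => (h v + K * dmax k p v) / C).
 exists C, (gfun F (ej 0) L). split.
 - apply D0_gfun. intros v Hv.
   assert (Sv : simplex k v). { destruct Hv as [<-|Hv]; [apply simplex_ej; lia|auto]. }
   apply (D0_phi k B K C (h v) v); auto. unfold C; lra. intros; apply (simplex_coord k); auto.
 - intros p Sp. set (G0 := gfun F (ej 0) L p).
   assert (Up : C * G0 <= h p + eps).
   { destruct (HL2 p Sp) as [v [Hv Hpv]].
     assert (Rabs (h p - h v) < e) by (apply Hu; auto; intros i Hi; specialize (Hpv i Hi); lra).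
     assert (dmax k p v < eta) by (apply dmax_lt; auto).
     pose proof (gfun_le F (ej 0) L p v (or_intror Hv)) as H1. fold G0 in H1.
     apply (Rmult_le_compat_l C) in H1; [|lra]. unfold F in H1.
     replace (C * ((h v + K * dmax k p v) / C)) with (h v + K * dmax k p v) in H1 by (field; lra).
     apply Rabs_def2 in H. assert (K * dmax k p v <= K * eta) by (apply Rmult_le_compat_l; lra).
     unfold e in *; lra. }
   assert (Lo : h p - eps <= C * G0).
   { assert ((h p - e) / C <= G0).
     { apply gfun_ge. intros v Hv.
       assert (Sv : simplex k v). { destruct Hv as [<-|Hv]; [apply simplex_ej; lia|auto]. }
       unfold F, Rdiv. apply Rmult_le_compat_r. apply Rlt_le, Rinv_0_lt_compat; auto.
       pose proof (dmax_ge0 k p v).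
       destruct (Rlt_dec (dmax k p v) dl).
       - assert (Rabs (h p - h v) < e).
         { apply Hu; auto. intros i Hi. pose proof (dmax_ge k p v i Hi). lra. }
         apply Rabs_def2 in H0. nra.
       - assert (K * dl <= K * dmax k p v) by (apply Rmult_le_compat_l; lra).
         pose proof (HB v Sv). pose proof (HB p Sp). apply Rabs_le_inv in H1. apply Rabs_le_inv in H2.
         unfold e in *; lra. }
     apply (Rmult_le_compat_l C) in H; [|lra].
     replace (C * ((h p - e) / C)) with (h p - e) in H by (field; lra). unfold e in *; lra. }
   apply Rabs_le. lra. Qed.

Theorem lemma2 (k : nat) (Hk : (1 <= k)%nat) :
  (forall f g : (nat -> R) -> R, D0 k f -> D0 k g ->
     D0 k (fun p => - f p) /\
     D0 k (fun p => Rmax (f p) (g p)) /\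
     D0 k (fun p => Rmin (f p) (g p)) /\
     (forall lam, 0 <= lam <= 1 ->
        D0 k (fun p => lam * f p + (1 - lam) * g p))) /\
  (forall h : (nat -> R) -> R, continuous_on_simplex k h ->
     forall eps, 0 < eps ->
       exists (N : nat) (c : nat -> R) (fs : nat -> (nat -> R) -> R),
         (forall i, (i < N)%nat -> D0 k (fs i)) /\
         (forall p, simplex k p ->
            Rabs (h p - sumR N (fun i => c i * fs i p)) <= eps)).
Proof.
  split.
  - intros f g Hf Hg. split; [apply D0_neg; auto|].
    split; [apply D0_max; auto|]. split; [apply D0_min; auto|].
    intros lam Hl. apply D0_conv; auto.
  - intros h Hc eps Heps. destruct (density k h Hk Hc eps Heps) as [C [g [Hg Hap]]].
    exists 1%nat, (fun _ => C), (fun _ => g). split.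
    + intros i Hi; auto.
    + intros p Sp. simpl. rewrite Rplus_0_l. auto.
Qed.
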